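(* Let $2\le d\leq 4$ and let $\rho$ be a diagonal symmetric (DS) state acting on $\mathbb{C}^d\otimes\mathbb{C}^d$. Then $\rho$ is separable if and only if $\rho$ is PPT (i.e. $\rho^{T_B}\succeq 0$).
   Context: Let $\{\ket{0},\dots,\ket{d-1}\}$ be the computational basis of $\mathbb{C}^d$. Define $\ket{D_{ii}}=\ket{ii}$ and, for $i<j$, $\ket{D_{ij}}=(\ket{ij}+\ket{ji})/\sqrt{2}$. A state $\rho$ on $\mathbb{C}^d\otimes\mathbb{C}^d$ is diagonal symmetric (DS) if $\rho=\sum_{0\le i\le j<d}p_{ij}\ket{D_{ij}}\bra{D_{ij}}$ with $p_{ij}\ge 0$ and $\sum_{i\le j}p_{ij}=1$. A state is separable if it is a convex combination of product states $\rho^A\otimes\rho^B$. The partial transpose $\rho^{T_B}$ is taken with respect to the computational basis of the second factor. *)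

(* Defs.v *)
From HB Require Import structures.
From mathcomp Require Import all_boot all_order all_algebra.
From mathcomp Require Import reals.
From mathcomp Require Import complex.
Set Implicit Arguments. Unset Strict Implicit. Unset Printing Implicit Defensive.
Import Order.TTheory GRing.Theory Num.Theory.
Local Open Scope ring_scope.

Section QDefs.
Variable R : realType.
Local Notation C := (R[i])%C.

Definition op (T : finType) := T -> T -> C.

Definition hermitian (T : finType) (A : op T) : Prop :=
  forall x y, A y x = (A x y)^*.

Definition psd (T : finType) (A : op T) : Prop :=
  hermitian A /\
  forall v : T -> C, 0 <= \sum_(x : T) \sum_(y : T) (v x)^* * A x y * v y.

Definition density (T : finType) (A : op T) : Prop :=
  psd A /\ \sum_(x : T) A x x = 1.

(* tensor product of operators on C^d and C^d, acting on C^d (x) C^d,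
   the basis of which is indexed by pairs (i, j) ~ |ij> *)
Definition tens (d : nat) (A B : op 'I_d) : op ('I_d * 'I_d)%type :=
  fun x y => A x.1 y.1 * B x.2 y.2.

Definition ptransB (d : nat) (rho : op ('I_d * 'I_d)%type) : op ('I_d * 'I_d)%type :=
  fun x y => rho (x.1, y.2) (y.1, x.2).

Definition separable (d : nat) (rho : op ('I_d * 'I_d)%type) : Prop :=
  exists (n : nat) (w : 'I_n -> R) (A B : 'I_n -> op 'I_d),
    [/\ (forall k, 0 <= w k), \sum_(k < n) w k = 1,
        (forall k, density (A k) /\ density (B k)) &
        forall x y, rho x y = \sum_(k < n) (w k)%:C%C * tens (A k) (B k) x y].

Definition PPT (d : nat) (rho : op ('I_d * 'I_d)%type) : Prop :=
  psd (ptransB rho).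

Definition Dvec (d : nat) (i j : 'I_d) : 'I_d * 'I_d -> C :=
  fun x => if i == j then (x == (i, i))%:R
           else ((x == (i, j))%:R + (x == (j, i))%:R) / sqrtC 2.

Definition proj (T : finType) (v : T -> C) : op T :=
  fun x y => v x * (v y)^*.

Definition DS (d : nat) (rho : op ('I_d * 'I_d)%type) : Prop :=
  exists p : 'I_d -> 'I_d -> R,
    [/\ (forall i j : 'I_d, (i <= j)%N -> 0 <= p i j),
        \sum_(i < d) \sum_(j < d | (i <= j)%N) p i j = 1 &
        forall x y, rho x y =
          \sum_(i < d) \sum_(j < d | (i <= j)%N) (p i j)%:C%C * proj (Dvec i j) x y].

End QDefs.

(* Main.v *)
Require Import Defs.
From HB Require Import structures.
From mathcomp Require Import all_boot all_order all_algebra.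
From mathcomp Require Import reals.
From mathcomp Require Import complex.
From mathcomp Require Import ring lra.
From Stdlib Require Import Classical.
From mathcomp Require Import spectral.
Import Order.TTheory GRing.Theory Num.Theory.
Local Open Scope ring_scope.
Set Implicit Arguments. Unset Strict Implicit. Unset Printing Implicit Defensive.

Section Num4.
Variable R : realType.

Lemma sqrt_sq (x : R) : 0 <= x -> Num.sqrt x ^+ 2 = x.
Proof. exact: sqr_sqrtr. Qed.

Lemma sqrt_prod (x y m : R) : 0 <= x -> 0 <= y -> 0 <= m -> x * y = m ^+ 2 ->
  Num.sqrt x * Num.sqrt y = m.
Proof.
move=> hx hy hm hxy; rewrite -sqrtrM // hxy sqrtr_sqr ger0_norm //.
Qed.

Lemma C4_numbers (mi ml mj mk a b c d : R) :
  0 < mi -> 0 < ml -> 0 < a -> 0 < b -> 0 < c -> 0 < d ->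
  (forall x y, 0 <= (mj - a^+2/mi - c^+2/ml) * x^+2 - 2 * (a*b/mi + c*d/ml) * x * y
                     + (mk - b^+2/mi - d^+2/ml) * y^+2) ->
  exists p1 q1 p2 q2 p3 q3 p4 q4 r : R,
   [/\ [/\ 0 <= p1, 0 <= q1, 0 <= p2, 0 <= q2 & 0 <= p3],
       [/\ 0 <= q3, 0 <= p4, 0 <= q4 & 0 <= r],
       [/\ p1 * q1 = a, p2 * q2 = b, p3 * q3 = c & p4 * q4 = d] &
       [/\ p1^+2 + p2^+2 = mi, p3^+2 + p4^+2 = ml, q1^+2 + q3^+2 = mj &
           q2^+2 + q4^+2 + r^+2 = mk]].
Proof.
move=> hmi hml ha hb hc hd.
set al := mj - a^+2/mi - c^+2/ml; set be := mk - b^+2/mi - d^+2/ml.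
set ga := a*b/mi + c*d/ml.
move=> hQ.
have hga : 0 < ga by rewrite addr_gt0 // divr_gt0 // mulr_gt0.
have hal : 0 < al.
  rewrite lt_def; have := hQ 1 0; rewrite !expr1n expr0n /= !mulr0 !mulr1 subr0 addr0 => ->.
  rewrite andbT; apply/eqP => h0.
  have := hQ ((be + 1) / (2 * ga)) 1; rewrite h0 mul0r add0r expr1n mulr1.
  have -> : - (2 * ga * ((be + 1) / (2 * ga))) + be * 1 = -1.
    by field; rewrite gt_eqF.
  by rewrite ler0N1.
have hab : ga ^+ 2 <= al * be.
  have := hQ ga al.
  have -> : al * ga ^+ 2 - 2 * ga * ga * al + be * al ^+ 2 = al * (al * be - ga^+2) by ring.
  by rewrite pmulr_rge0 // subr_ge0.
set ui := (a * ga + b * al) / mi; set ul := (c * ga + d * al) / ml.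
have hui : 0 < ui by rewrite divr_gt0 // addr_gt0 // mulr_gt0.
have hul : 0 < ul by rewrite divr_gt0 // addr_gt0 // mulr_gt0.
have hs1 : a * ga + b * al != 0 by rewrite gt_eqF // addr_gt0 // mulr_gt0.
have hs2 : c * ga + d * al != 0 by rewrite gt_eqF // addr_gt0 // mulr_gt0.
have hs3 : a * b * ml + c * d * mi != 0 by rewrite gt_eqF // addr_gt0 // !mulr_gt0.
have ne := (hs3, hs1, hs2, gt_eqF hui, gt_eqF hul, gt_eqF hga, gt_eqF hal, gt_eqF hmi, gt_eqF hml).
exists (Num.sqrt (a * ga / ui)), (Num.sqrt (a * ui / ga)),
       (Num.sqrt (b * al / ui)), (Num.sqrt (b * ui / al)),
       (Num.sqrt (c * ga / ul)), (Num.sqrt (c * ul / ga)),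
       (Num.sqrt (d * al / ul)), (Num.sqrt (d * ul / al)),
       (Num.sqrt (be - ga^+2 / al)).
have P x y : 0 < x -> 0 < y -> 0 <= x * y by move=> *; rewrite ltW // mulr_gt0.
have D x y z : 0 < x -> 0 < y -> 0 < z -> 0 <= x * y / z by move=> *; rewrite ltW // divr_gt0 // mulr_gt0.
split; [by split; apply: sqrtr_ge0 | by split; apply: sqrtr_ge0 | | ].
  split; apply: sqrt_prod; rewrite ?D ?ltW //; field; by rewrite ?ne.
have hr : 0 <= be - ga ^+ 2 / al by rewrite subr_ge0 ler_pdivrMr // mulrC.
rewrite !sqrt_sq ?D //; split.
- rewrite /ui; field; by rewrite ?ne.
- rewrite /ul; field; by rewrite ?ne.
- rewrite /ui /ul /ga /al; field.
  by rewrite ?ne.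
- rewrite /ui /ul /ga /be; field.
  by rewrite ?ne.
Qed.
End Num4.

Section CP.
Variable R : realType.
Variable T : finType.
Implicit Types M : T -> T -> R.

Definition Qf M (c : T -> R) := \sum_x \sum_y c x * M x y * c y.
Definition symm M := forall x y, M x y = M y x.
Definition nonneg M := forall x y, 0 <= M x y.
Definition psdR M := forall c, 0 <= Qf M c.
Definition CP M := exists n (a : 'I_n -> T -> R),
  (forall k x, 0 <= a k x) /\ forall x y, M x y = \sum_(k < n) a k x * a k y.

Lemma sum_delta (F : T -> R) i : \sum_y F y * (y == i)%:R = F i.
Proof.
rewrite (bigD1 i) //= eqxx mulr1 big1 ?addr0 // => y /negbTE ->; by rewrite mulr0.
Qed.

Lemma Q_shift M c i lam : symm M ->
  Qf M (fun x => c x + lam * (x == i)%:R) =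
  Qf M c + 2 * lam * (\sum_y M i y * c y) + lam ^+ 2 * M i i.
Proof.
move=> sM; rewrite /Qf.
have E x y : (c x + lam * (x == i)%:R) * M x y * (c y + lam * (y == i)%:R) =
  c x * M x y * c y + (lam * (c x * M x y)) * (y == i)%:R
  + (lam * (M x y * c y) + lam ^+ 2 * M x y * (y == i)%:R) * (x == i)%:R.
  by ring.
under eq_bigr do under eq_bigr do rewrite E.
under eq_bigr do rewrite !big_split /= sum_delta -mulr_suml.
rewrite !big_split /= sum_delta big_split /= sum_delta.
rewrite -mulr_sumr -[X in _ + (X + _)]mulr_sumr.
have -> : \sum_i0 c i0 * M i0 i = \sum_y M i y * c y.
  by apply: eq_bigr => y _; rewrite sM mulrC.
ring.
Qed.


Lemma Q0 M : Qf M (fun _ => 0) = 0.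
Proof. by rewrite /Qf big1 // => x _; rewrite big1 // => y _; rewrite !mul0r. Qed.

Lemma psd_diag M i : symm M -> psdR M -> 0 <= M i i.
Proof.
move=> sM pM; have := pM (fun x => 0 + 1 * (x == i)%:R).
rewrite Q_shift // Q0 big1 ?mulr0 ?add0r ?expr1n ?mul1r // => y _; by rewrite mulr0.
Qed.

Lemma Qdelta M j : symm M -> Qf M (fun x => 0 + 1 * (x == j)%:R) = M j j.
Proof.
move=> sM; rewrite Q_shift // Q0 big1 ?mulr0 ?add0r ?expr1n ?mul1r // => y _; by rewrite mulr0.
Qed.

Lemma psd_pivot M i c : symm M -> psdR M -> 0 < M i i ->
  (\sum_y M i y * c y) ^+ 2 / M i i <= Qf M c.
Proof.
move=> sM pM hi; set S := \sum_y M i y * c y.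
have := pM (fun x => c x + (- (S / M i i)) * (x == i)%:R).
rewrite Q_shift // -subr_ge0 => H; rewrite -subr_ge0.
have -> : Qf M c - S ^+ 2 / M i i =
   Qf M c + 2 * - (S / M i i) * S + (- (S / M i i)) ^+ 2 * M i i.
  by field; rewrite gt_eqF.
by rewrite -(subr0 (_ + _)).
Qed.

Lemma psd_zero_row M i j : symm M -> psdR M -> M i i = 0 -> M i j = 0.
Proof.
move=> sM pM hi; apply: contra_eq (eqxx true) => hij; apply/negP => _.
have := pM (fun x => (0 + 1 * (x == j)%:R) + (- ((M j j + 1) / (2 * M i j))) * (x == i)%:R).
rewrite Q_shift // Qdelta // hi mulr0 addr0.
have -> : \sum_y M i y * (0 + 1 * (y == j)%:R) = M i j.
  by under eq_bigr do rewrite add0r mul1r; rewrite sum_delta.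
have -> : M j j + 2 * - ((M j j + 1) / (2 * M i j)) * M i j = -1.
  by field; rewrite hij.
by rewrite ler0N1.
Qed.

Lemma Q_sub_rank1 M (a c : T -> R) :
  Qf (fun x y => M x y - a x * a y) c = Qf M c - (\sum_x a x * c x) ^+ 2.
Proof.
rewrite /Qf expr2 mulr_suml -sumrB; apply: eq_bigr => x _.
rewrite mulr_sumr -sumrB; apply: eq_bigr => y _; ring.
Qed.

Definition cnt M := #|[set p : T * T | M p.1 p.2 != 0]|.

Lemma prod_pos (a b : R) : 0 <= a -> 0 <= b -> 0 < a * b -> 0 < a /\ 0 < b.
Proof.
move=> ha hb hab; split; rewrite lt_def; [rewrite ha andbT | rewrite hb andbT];
  apply: contraTneq hab => ->; by rewrite ?mul0r ?mulr0 ltxx.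
Qed.

Lemma pivot_step M i : symm M -> nonneg M -> psdR M -> 0 < M i i ->
  (forall j k, 0 < M i j -> 0 < M i k -> 0 < M j k) ->
  exists a : T -> R, (forall x, 0 <= a x) /\
    [/\ symm (fun x y => M x y - a x * a y), nonneg (fun x y => M x y - a x * a y),
        psdR (fun x y => M x y - a x * a y) & (cnt (fun x y => (M x y - a x * a y)%R) < cnt M)%N].
Proof.
move=> sM nM pM hi simp.
pose g := fun p : T * T => if 0 < M i p.1 * M i p.2
  then M i i * M p.1 p.2 / (M i p.1 * M i p.2) else 1.
have gpos p : 0 < g p.
  rewrite /g; case: ifP => // hp; have [h1 h2] := prod_pos (nM _ _) (nM _ _) hp.
  by apply: divr_gt0 => //; apply: mulr_gt0 => //; apply: simp.
case: (@arg_minP _ _ _ (i, i) xpredT g isT) => p0 _ hmin.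
pose t := if 1 <= g p0 then 1 else g p0.
have t0 : 0 < t by rewrite /t; case: ifP.
have t1 : t <= 1 by rewrite /t; case: ifP => // /negbT; rewrite -ltNge => /ltW.
have tg p : t <= g p.
  apply: le_trans (hmin p isT); rewrite /t; case: ifP => //.
have mi0 : M i i != 0 by rewrite gt_eqF.
pose a := fun x => Num.sqrt (t / M i i) * M i x.
have aa x y : a x * a y = t / M i i * M i x * M i y.
  rewrite /a mulrACA -expr2 sqr_sqrtr ?mulrA // divr_ge0 // ?ltW //.
exists a; split.
  by move=> x; rewrite /a mulr_ge0 ?sqrtr_ge0.
split.
- by move=> x y /=; rewrite sM mulrC.
- move=> x y /=; rewrite aa subr_ge0.
  case: (boolP (0 < M i x * M i y)) => hp.
    have := tg (x, y); rewrite /g /= hp ler_pdivlMr // => h.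
    have -> : t / M i i * M i x * M i y = (t * (M i x * M i y)) / M i i.
      by ring.
    by rewrite ler_pdivrMr // (mulrC (M x y)).
  rewrite -mulrA; have -> : M i x * M i y = 0.
    by apply/eqP; rewrite eq_le mulr_ge0 ?nM // andbT leNgt.
  by rewrite mulr0 nM.
- move=> c /=; rewrite Q_sub_rank1 subr_ge0.
  have -> : \sum_x a x * c x = Num.sqrt (t / M i i) * \sum_y M i y * c y.
    by rewrite mulr_sumr; apply: eq_bigr => x _; rewrite /a mulrA.
  rewrite exprMn sqr_sqrtr; last by rewrite divr_ge0 // ltW.
  apply: le_trans _ (psd_pivot c sM pM hi).
  set S := \sum_y M i y * c y.
  have -> : t / M i i * S ^+ 2 = t * (S ^+ 2 / M i i) by ring.
  by rewrite ler_piMl // divr_ge0 ?sqr_ge0 // ltW.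
- apply: proper_card; apply/properP; split.
    apply/subsetP => p; rewrite !inE /=; apply: contraNneq => hp0.
    have hz : M i p.1 * M i p.2 = 0.
      apply/eqP; rewrite eq_le mulr_ge0 ?nM // andbT leNgt; apply/negP => hp.
      have [h1 h2] := prod_pos (nM _ _) (nM _ _) hp.
      by move: (simp _ _ h1 h2); rewrite hp0 ltxx.
    by rewrite aa hp0 -mulrA hz mulr0 subrr.
  case: (boolP (1 <= g p0)) => h1.
    exists (i, i); rewrite !inE //= aa /t h1 negbK; apply/eqP; field; exact: mi0.
  have hp : 0 < M i p0.1 * M i p0.2.
    by move: h1; rewrite /g; case: ifP => //; rewrite lexx.
  have [h2 h3] := prod_pos (nM _ _) (nM _ _) hp.
  exists p0; rewrite !inE /=.
    by rewrite gt_eqF // simp.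
  rewrite negbK aa /t (negbTE h1) /g hp; apply/eqP; field.
  by rewrite mi0 !gt_eqF.
Qed.


Section Four.
Variables (i j k l : T).
Hypotheses (hij : i != j) (hik : i != k) (hil : i != l) (hjk : j != k) (hjl : j != l) (hkl : k != l).
Hypothesis cov : forall x, [|| x == i, x == j, x == k | x == l].

Lemma sum4 (F : T -> R) : \sum_x F x = F i + F j + F k + F l.
Proof.
rewrite (bigD1 i) //= (bigD1 j) /=; last by rewrite eq_sym hij.
rewrite (bigD1 k) /=; last by rewrite eq_sym hik eq_sym hjk.
rewrite (bigD1 l) /=; last by rewrite eq_sym hil eq_sym hjl eq_sym hkl.
rewrite big1 ?addr0 ?addrA // => x /andP[/andP[/andP[h1 h2] h3] h4].
by move: (cov x); rewrite (negbTE h1) (negbTE h2) (negbTE h3) (negbTE h4).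
Qed.

Definition ev (a c : T) (p q : R) : T -> R :=
  fun x => if x == a then p else if x == c then q else 0.

Lemma C4_CP M : symm M -> nonneg M -> psdR M ->
  0 < M i i -> 0 < M l l -> 0 < M i j -> 0 < M i k -> 0 < M l j -> 0 < M l k ->
  M j k = 0 -> M i l = 0 -> CP M.
Proof.
move=> sM nM pM hi hl ha hb hc hd hjk0 hil0.
have E := (eqxx, negbTE hij, negbTE hik, negbTE hil, negbTE hjk, negbTE hjl, negbTE hkl,
  eq_sym j i, eq_sym k i, eq_sym l i, eq_sym k j, eq_sym l j, eq_sym l k).
have Ssym := (sM j i, sM k i, sM j l, sM k l, sM l i, sM k j).
have [p1 [q1 [p2 [q2 [p3 [q3 [p4 [q4 [r]]]]]]]]] :
  exists p1 q1 p2 q2 p3 q3 p4 q4 r : R,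
   [/\ [/\ 0 <= p1, 0 <= q1, 0 <= p2, 0 <= q2 & 0 <= p3],
       [/\ 0 <= q3, 0 <= p4, 0 <= q4 & 0 <= r],
       [/\ p1 * q1 = M i j, p2 * q2 = M i k, p3 * q3 = M l j & p4 * q4 = M l k] &
       [/\ p1^+2 + p2^+2 = M i i, p3^+2 + p4^+2 = M l l, q1^+2 + q3^+2 = M j j &
           q2^+2 + q4^+2 + r^+2 = M k k]].
  apply: C4_numbers => // x y.
  pose cv := fun z => if z == i then - (M i j * x + M i k * y) / M i i
     else if z == j then x else if z == k then y else - (M l j * x + M l k * y) / M l l.
  have := pM cv; rewrite /Qf (sum4 (fun x => \sum_y cv x * M x y * cv y)). rewrite (sum4 (fun y => cv i * M i y * cv y)) (sum4 (fun y => cv j * M j y * cv y)) (sum4 (fun y => cv k * M k y * cv y)) (sum4 (fun y => cv l * M l y * cv y)).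
  rewrite /cv !E /= !Ssym hjk0 hil0.
  set LHS := (X in 0 <= X); set RHS := (X in _ -> 0 <= X).
  suff -> : LHS = RHS by [].
  rewrite /LHS /RHS; field; rewrite !gt_eqF //.
move=> [[g1 g2 g3 g4 g5] [g6 g7 g8 g9] [e1 e2 e3 e4] [f1 f2 f3 f4]].
exists 5, (fun n => nth (fun _ => 0) [:: ev i j p1 q1; ev i k p2 q2; ev l j p3 q3;
                                       ev l k p4 q4; ev k k r 0] n).
split.
  move=> n x; case: n => [[|[|[|[|[|n]]]]]] //= _; rewrite /ev; by repeat case: ifP.
move=> x y; rewrite !big_ord_recr big_ord0 /= add0r /ev.
have := cov x; have := cov y.
case/or4P => /eqP -> ; case/or4P => /eqP ->; rewrite !E ?Ssym ?hjk0 ?hil0 /=;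
  rewrite ?(mulr0, mul0r, addr0, add0r);
  first [ rewrite -e1; ring | rewrite -e2; ring | rewrite -e3; ring | rewrite -e4; ring
        | rewrite -f1; ring | rewrite -f2; ring | rewrite -f3; ring | rewrite -f4; ring
        | by [] ].
Qed.

End Four.

Lemma CP_add M M1 M2 : CP M1 -> CP M2 -> (forall x y, M x y = M1 x y + M2 x y) -> CP M.
Proof.
move=> [n1 [a1 [h1 e1]]] [n2 [a2 [h2 e2]]] e.
exists (n1 + n2)%N, (fun k => match split k with inl k1 => a1 k1 | inr k2 => a2 k2 end).
split; first by move=> k x; case: (split k).
move=> x y; rewrite e e1 e2 big_split_ord /=; congr (_ + _); apply: eq_bigr => k _.
  by have := unsplitK (inl k : 'I_n1 + 'I_n2) => /= ->.
by have := unsplitK (inr k : 'I_n1 + 'I_n2) => /= ->.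
Qed.

Lemma CP_rank1 (a : T -> R) : (forall x, 0 <= a x) -> CP (fun x y => a x * a y).
Proof.
move=> ha; exists 1%N, (fun _ => a); split => // x y; by rewrite big_ord1.
Qed.

Lemma CP_zero M : (forall x y, M x y = 0) -> CP M.
Proof. move=> h; exists 0%N, (fun _ _ => 0); split => // x y; by rewrite big_ord0 h. Qed.

Lemma no5 : (#|T| <= 4)%N -> forall x1 x2 x3 x4 x5 : T,
  x1 != x2 -> x1 != x3 -> x1 != x4 -> x1 != x5 -> x2 != x3 -> x2 != x4 ->
  x2 != x5 -> x3 != x4 -> x3 != x5 -> x4 != x5 -> False.
Proof.
move=> hT x1 x2 x3 x4 x5 h12 h13 h14 h15 h23 h24 h25 h34 h35 h45.
have u : uniq [:: x1; x2; x3; x4; x5].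
  by rewrite /= !inE !negb_or h12 h13 h14 h15 h23 h24 h25 h34 h35 h45.
have := max_card (mem [:: x1; x2; x3; x4; x5]).
by rewrite (card_uniqP u) /= => /leq_trans /(_ hT).
Qed.

Lemma pos_diag M x y : symm M -> nonneg M -> psdR M -> 0 < M x y -> 0 < M y y.
Proof.
move=> sM nM pM h; rewrite lt_def psd_diag // andbT; apply/eqP => h0.
by move: h; rewrite sM (@psd_zero_row M y x sM pM h0) ltxx.
Qed.

Lemma get_l M (hT : (#|T| <= 4)%N) i j k a b : symm M -> nonneg M -> psdR M ->
  i != j -> i != k -> j != k -> M j k = 0 ->
  0 < M j a -> 0 < M j b -> M a b = 0 ->
  exists l, [/\ l != i, l != j, l != k, 0 < M j l & M i l = 0].
Proof.
move=> sM nM pM hij hik hjk hjk0 ha hb hab0.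
have haa := pos_diag sM nM pM ha.
have hja : j != a by apply/eqP => e; move: hb; rewrite e hab0 ltxx.
have hjb : j != b by apply/eqP => e; move: ha; rewrite e sM hab0 ltxx.
have hka : k != a by apply/eqP => e; move: ha; rewrite -e hjk0 ltxx.
have hkb : k != b by apply/eqP => e; move: hb; rewrite -e hjk0 ltxx.
have hab : a != b by apply/eqP => e; move: haa; rewrite {2}e hab0 ltxx.
case: (eqVneq a i) => [ei | hai].
  exists b; split => //; last by rewrite -ei.
  - by rewrite -ei eq_sym.
  - by rewrite eq_sym.
  - by rewrite eq_sym.
case: (eqVneq b i) => [ei | hbi].
  exists a; split => //; last by rewrite -ei sM.
  - by rewrite eq_sym.
  - by rewrite eq_sym.
exfalso; apply: (@no5 hT i j k a b) => //; by rewrite eq_sym.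
Qed.

Theorem CP_DNN : (#|T| <= 4)%N -> forall M, symm M -> nonneg M -> psdR M -> CP M.
Proof.
move=> hT M; have [n] := ubnP (cnt M); elim: n M => // n IH M hn sM nM pM.
case: (classic (exists i, 0 < M i i /\ forall j k, 0 < M i j -> 0 < M i k -> 0 < M j k))
  => [[i [hi simp]] | Hns].
  have [a [ha [s' n' p' hc]]] := pivot_step sM nM pM hi simp.
  apply: (CP_add (IH _ _ s' n' p') (CP_rank1 ha)); first exact: leq_trans hc hn.
  by move=> x y; rewrite subrK.
case: (classic (exists i, 0 < M i i)) => [[i hi] | Hz]; last first.
  apply: CP_zero => x y; apply: psd_zero_row => //.
  apply/eqP; rewrite eq_le psd_diag // andbT leNgt; apply/negP => h; apply: Hz; by exists x.
have Hns' i0 : 0 < M i0 i0 -> exists j k, [/\ 0 < M i0 j, 0 < M i0 k & M j k = 0].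
  move=> h0; apply: NNPP => H; apply: Hns; exists i0; split => // j k h1 h2.
  rewrite lt_def nM andbT; apply/eqP => h3; apply: H; by exists j, k.
have [j [k [hij0 hik0 hjk0]]] := Hns' i hi.
have hij : i != j by apply/eqP => e; move: hik0; rewrite e hjk0 ltxx.
have hik : i != k by apply/eqP => e; move: hij0; rewrite e sM hjk0 ltxx.
have hjj := pos_diag sM nM pM hij0.
have hkk := pos_diag sM nM pM hik0.
have hjk : j != k by apply/eqP => e; move: hjj; rewrite {2}e hjk0 ltxx.
have [a [b [ha hb hab]]] := Hns' j hjj.
have [l [hli hlj hlk hjl hil0]] := get_l hT sM nM pM hij hik hjk hjk0 ha hb hab.
have [a' [b' [ha' hb' hab']]] := Hns' k hkk.
have hkj0 : M k j = 0 by rewrite sM.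
have hkj : k != j by rewrite eq_sym.
have [l' [hl'i hl'k hl'j hkl' hil'0]] :=
  get_l hT sM nM pM hik hij hkj hkj0 ha' hb' hab'.
have el : l' = l.
  apply/eqP; apply: contraT => hne; exfalso.
  apply: (@no5 hT i j k l l') => //; by rewrite eq_sym.
subst l'.
have cov x : [|| x == i, x == j, x == k | x == l].
  apply: contraT; rewrite !negb_or => /and4P [h1 h2 h3 h4]; exfalso.
  apply: (@no5 hT i j k l x) => //; by rewrite eq_sym.
apply: (C4_CP (l := l) hij hik _ hjk _ _ cov) => //.
- by rewrite eq_sym.
- by rewrite eq_sym.
- by rewrite eq_sym.
- exact: pos_diag sM nM pM hjl.
- by rewrite sM.
- by rewrite sM.
Qed.

End CP.

Section Quantum.
Variable R : realType.
Local Notation C := (R[i]).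

Section Gen.
Variable T : finType.

Lemma conj_sum (I : finType) (F : I -> C) : (\sum_i F i)^* = \sum_i (F i)^*.
Proof. by rewrite rmorph_sum. Qed.
Lemma conjM (a b : C) : (a * b)^* = a^* * b^*.
Proof. by rewrite rmorphM. Qed.

Definition qf (K : op R T) (v : T -> C) := \sum_x \sum_y (v x)^* * K x y * v y.

Lemma gram_qf (I : finType) (c : I -> C) (F : I -> T -> C) (K : op R T) v :
  (forall x y, K x y = \sum_p c p * F p x * (F p y)^*) ->
  qf K v = \sum_p c p * ((\sum_x (v x)^* * F p x) * (\sum_x (v x)^* * F p x)^*).
Proof.
move=> hK; rewrite /qf.
under eq_bigr => x _ do under eq_bigr => y _ do rewrite hK mulr_sumr mulr_suml.
under eq_bigr => x _ do rewrite exchange_big.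
rewrite exchange_big; apply: eq_bigr => p _.
rewrite conj_sum big_distrlr mulr_sumr; apply: eq_bigr => x _.
rewrite mulr_sumr; apply: eq_bigr => y _.
rewrite /= conjM conjCK; ring.
Qed.

Lemma psd_gram (I : finType) (c : I -> C) (F : I -> T -> C) (K : op R T) :
  (forall p, 0 <= c p) ->
  (forall x y, K x y = \sum_p c p * F p x * (F p y)^*) -> psd K.
Proof.
move=> hc hK; split.
  move=> x y; rewrite !hK conj_sum; apply: eq_bigr => p _.
  by rewrite !conjM conjCK (conj_Creal (ger0_real (hc p))) mulrAC.
move=> v; have := gram_qf v hK; rewrite /qf => ->; apply: sumr_ge0 => p _.
by rewrite mulr_ge0 // mul_conjC_ge0.
Qed.

End Gen.

Definition mxof d (B : op R 'I_d) : 'M[C]_d := \matrix_(i, j) B i j.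
Definition dc d (B : op R 'I_d) (m : 'I_d) : C := spectral_diag (mxof B) 0 m.
Definition dF d (B : op R 'I_d) (m x : 'I_d) : C := (spectralmx (mxof B) m x)^*.

Lemma psd_decomp d (B : op R 'I_d) : psd B ->
  (forall m, 0 <= dc B m) /\ forall x y, B x y = \sum_m dc B m * dF B m x * (dF B m y)^*.
Proof.
move=> [hB pB].
have eB : (mxof B ^t*)%sesqui = mxof B.
  by apply/matrixP => i j; rewrite !mxE hB conjCK.
have nB : mxof B \is normalmx by apply/normalmxP; rewrite eB.
have := orthomx_spectralP nB; move=> /= eBm.
have uP := spectral_unitarymx (mxof B).
move: eBm; rewrite invmx_unitary //.
rewrite /dc /dF.
set P := spectralmx (mxof B); set sp := spectral_diag (mxof B) => eBm.
have hPP a b : \sum_x P a x * (P b x)^* = (a == b)%:R.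
  move/unitarymxP: uP => /matrixP /(_ a b); rewrite !mxE => <-.
  by apply: eq_bigr => x _; rewrite !mxE.
have hBxy x y : B x y = \sum_m sp 0 m * (P m x)^* * (P m y)^*^*.
  transitivity (mxof B x y); first by rewrite mxE.
  rewrite eBm.
  rewrite mul_mx_diag mxE; apply: eq_bigr => m _.
  by rewrite !mxE conjCK (mulrC (_^*)).
split => // m0; have := pB (fun y => (P m0 y)^*).
have := gram_qf (fun y => (P m0 y)^*) hBxy; rewrite /qf => ->.
under eq_bigr => m _ do under eq_bigr => x _ do rewrite conjCK.
rewrite (bigD1 m0) //= hPP eqxx conjC1 mulr1 mulr1 big1 ?addr0 // => m hm.
by rewrite hPP eq_sym (negbTE hm) mul0r mulr0.
Qed.

Lemma sep_PPT d (rho : op R ('I_d * 'I_d)%type) : separable rho -> PPT rho.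
Proof.
case=> n [w [A [B [hw _ hAB hrho]]]].
pose c := fun p : ('I_n * 'I_d) * 'I_d =>
  (w p.1.1)%:C%C * dc (A p.1.1) p.1.2 * dc (B p.1.1) p.2.
pose G := fun (p : ('I_n * 'I_d) * 'I_d) (x : 'I_d * 'I_d) =>
  dF (A p.1.1) p.1.2 x.1 * (dF (B p.1.1) p.2 x.2)^*.
apply: (@psd_gram _ _ c G).
  move=> [[k a] b]; rewrite /c /= !mulr_ge0 ?ler0c //.
    exact: (psd_decomp (hAB k).1.1).1.
  exact: (psd_decomp (hAB k).2.1).1.
move=> x y; rewrite /ptransB hrho.
have -> : \sum_(k < n) (w k)%:C%C * tens (A k) (B k) (x.1, y.2) (y.1, x.2) =
  \sum_(k < n) \sum_(a < d) \sum_(b < d) c ((k, a), b) * G ((k, a), b) x * (G ((k, a), b) y)^*.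
  apply: eq_bigr => k _; rewrite /tens /=.
  rewrite (psd_decomp (hAB k).1.1).2 (psd_decomp (hAB k).2.1).2.
  rewrite big_distrlr mulr_sumr; apply: eq_bigr => a _.
  rewrite mulr_sumr; apply: eq_bigr => b _.
  rewrite /c /G /= !conjM !conjCK; ring.
by rewrite pair_bigA /= pair_bigA.
Qed.


Lemma conj_rC (r : R) : ((r%:C)%C)^* = (r%:C)%C.
Proof. apply: conj_Creal. by rewrite complex_real. Qed.

Lemma sum2_single (I : finType) (P : I -> I -> bool) (f : I -> I -> C) a b :
  P a b -> (forall i j, P i j -> (i != a) || (j != b) -> f i j = 0) ->
  \sum_i \sum_(j | P i j) f i j = f a b.
Proof.
move=> hab h; rewrite (bigD1 a) //= (bigD1 b) //= big1 ?addr0 => [|j /andP[hj hjb]].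
  rewrite big1 ?addr0 // => i hi; apply: big1 => j hj; apply: h => //; by rewrite hi.
by apply: h => //; rewrite hjb orbT.
Qed.

Definition Mp d (p : 'I_d -> 'I_d -> R) (s t : 'I_d) : R :=
  if s == t then p s s else if (s < t)%N then p s t / 2 else p t s / 2.

Definition sorted2 d (x : 'I_d * 'I_d) : 'I_d * 'I_d :=
  if (x.1 <= x.2)%N then x else (x.2, x.1).

Lemma sqrt2_facts : sqrtC (2 : C) * (sqrtC (2 : C))^* = 2 /\ sqrtC (2 : C) != 0.
Proof.
have h2 : (0 : C) <= 2 by rewrite ler0n.
rewrite conj_Creal ?ger0_real ?sqrtC_ge0 // -expr2 sqrtCK; split => //.
by rewrite sqrtC_eq0 pnatr_eq0.
Qed.

Lemma Dvec_zero d (i j : 'I_d) x : (i <= j)%N -> (i, j) != sorted2 x -> Dvec R i j x = 0.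
Proof.
rewrite /Dvec /sorted2; case: x => x1 x2 /= hij hne.
case: eqP => [eij | nij].
  subst j; case: eqP => // [[e1 e2]]; subst.
  by move: hne; rewrite leqnn eqxx.
case: eqP => [[e1 e2]|_].
  by subst; move: hne; rewrite hij eqxx.
case: eqP => [[e1 e2]|_]; last by rewrite addr0 mul0r.
subst; move: hne; have -> : (j <= i)%N = false.
  apply/negbTE; rewrite -ltnNge ltn_neqAle hij andbT.
  by apply/eqP => e; apply: nij; apply: val_inj.
by rewrite /= eqxx.
Qed.

Lemma offdiag_val (r : R) (b1 b2 : bool) : ~~ (b1 && b2) ->
  (r%:C)%C * ((1 + 0) / sqrtC 2) * ((b1%:R + b2%:R) / sqrtC 2)^* =
  (b1 || b2)%:R * (((r / 2)%:C)%C).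
Proof.
move=> hb; have [s2 s20] := sqrt2_facts.
have -> : (b1%:R + b2%:R : C) = (b1 || b2)%:R.
  by case: b1 b2 hb => [] [] //= _; rewrite ?addr0 ?add0r.
rewrite conjM conj_Creal ?realn // addr0 mul1r.
rewrite rmorphM /=.
have -> : (((2 : R)^-1)%:C)%C = (2 : C)^-1 by rewrite fmorphV /= rmorph_nat.
have -> : ((sqrtC (2 : C))^-1)^* = (sqrtC 2)^-1.
  by rewrite conj_Creal // ger0_real // invr_ge0 sqrtC_ge0 ler0n.
have e2 : sqrtC (2 : C) * sqrtC 2 = 2 by rewrite -expr2 sqrtCK.
rewrite -[in RHS]e2; field.
by rewrite s20.
Qed.

Lemma DS_form d (rho : op R ('I_d * 'I_d)%type) : DS rho ->
  exists p : 'I_d -> 'I_d -> R,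
    [/\ (forall i j : 'I_d, (i <= j)%N -> 0 <= p i j),
        \sum_(i < d) \sum_(j < d | (i <= j)%N) p i j = 1 &
        forall x y, rho x y = ((y == x) || (y == (x.2, x.1)))%:R * ((Mp p x.1 x.2)%:C)%C].
Proof.
case=> p [hp hs hrho]; exists p; split => // x y.
rewrite hrho (@sum2_single _ _ _ (sorted2 x).1 (sorted2 x).2); last first.
- move=> i j hij hne; rewrite /proj Dvec_zero ?mul0r ?mulr0 //.
  move: hne; case: (sorted2 x) => a b /= hne; apply/negP => /eqP [e1 e2].
  by move: hne; rewrite e1 e2 !eqxx.
- by rewrite /sorted2; case: ifP => //= /negbT; rewrite -ltnNge => /ltnW.
case: x => x1 x2; case: y => y1 y2; rewrite /sorted2 /Mp /proj /Dvec /=.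
case: (ltngtP x1 x2) => hx /=.
- have nx : x1 != x2 by rewrite neq_ltn hx.
  rewrite (negbTE nx) !eqxx /=.
  rewrite (_ : (x1, x2) == (x2, x1) = false); last by rewrite xpair_eqE (negbTE nx).
  rewrite (_ : (false%:R : C) = 0) // mulrA offdiag_val //; apply/negP => /andP [/eqP e1 /eqP e2].
  by move: e1; rewrite e2 => -[] e _; move: nx; rewrite e eqxx.
- have nx : x2 != x1 by rewrite neq_ltn hx.
  rewrite (negbTE nx) (eq_sym x1 x2) (negbTE nx) !eqxx /=.
  rewrite (_ : (x1, x2) == (x2, x1) = false); last by rewrite xpair_eqE eq_sym (negbTE nx).
  rewrite (_ : (false%:R : C) = 0) // (addrC 0) mulrA.
  rewrite (addrC ((_ == (x2, x1))%:R)) offdiag_val; first by rewrite orbC.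
  apply/negP => /andP [/eqP e1 /eqP e2].
  by move: e1; rewrite e2 => -[] e _; move: nx; rewrite e eqxx.
- have ex : x1 = x2 by apply: val_inj.
  by subst x2; rewrite !eqxx /= orbb mul1r conj_Creal ?realn // mulrC.
Qed.


Lemma Mp_sym d (p : 'I_d -> 'I_d -> R) s t : Mp p s t = Mp p t s.
Proof.
rewrite /Mp eq_sym; case: (ltngtP s t) => h.
- have e : (t == s) = false by apply/eqP => e; move: h; rewrite e ltnn.
  by rewrite e.
- have e : (t == s) = false by apply/eqP => e; move: h; rewrite e ltnn.
  by rewrite e.
- have e : s = t by apply: val_inj.
  by rewrite e.
Qed.

Lemma Mp_nonneg d (p : 'I_d -> 'I_d -> R) s t :
  (forall i j : 'I_d, (i <= j)%N -> 0 <= p i j) -> 0 <= Mp p s t.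
Proof.
move=> hp; rewrite /Mp; case: eqP => _; first exact: hp.
case: ifP => h; rewrite divr_ge0 ?ler0n //; apply: hp; first exact: ltnW.
by rewrite leqNgt h.
Qed.

Lemma split_le d (f : 'I_d -> R) (s : 'I_d) :
  \sum_(t < d | (s <= t)%N) f t = f s + \sum_(t < d | (s < t)%N) f t.
Proof.
rewrite (bigD1 s) ?leqnn //; congr (_ + _); apply: eq_bigl => t.
by rewrite ltn_neqAle andbC eq_sym.
Qed.

Lemma Mp_sum d (p : 'I_d -> 'I_d -> R) :
  \sum_s \sum_t Mp p s t = \sum_(i < d) \sum_(j < d | (i <= j)%N) p i j.
Proof.
have E (s : 'I_d) : \sum_(t < d) Mp p s t = \sum_(t < d | (s <= t)%N) Mp p s t + \sum_(t < d | (t < s)%N) Mp p s t.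
  rewrite (bigID (fun t : 'I_d => (s <= t)%N)) /=; congr (_ + _).
  by apply: eq_bigl => t; rewrite -ltnNge.
under eq_bigr do rewrite E.
rewrite big_split /=.
have -> : \sum_(s < d) \sum_(t < d | (t < s)%N) Mp p s t =
          \sum_(s < d) \sum_(t < d | (s < t)%N) Mp p s t.
  rewrite (exchange_big_dep xpredT) //=; apply: eq_bigr => s _.
  by apply: eq_bigr => t _; rewrite Mp_sym.
rewrite -big_split /=; apply: eq_bigr => s _.
rewrite !split_le.
have e1 : \sum_(t < d | (s < t)%N) Mp p s t = \sum_(t < d | (s < t)%N) p s t / 2.
  apply: eq_bigr => t h; rewrite /Mp.
  have -> : (s == t) = false by apply/eqP => e; move: h; rewrite e ltnn.
  by rewrite h.
have e2 : \sum_(t < d | (s < t)%N) p s t =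
   \sum_(t < d | (s < t)%N) p s t / 2 + \sum_(t < d | (s < t)%N) p s t / 2.
  rewrite -big_split /=; apply: eq_bigr => t _; field.
all: try done. rewrite e1 e2 /Mp eqxx; ring.
Qed.


Lemma conjX (x : C) n : (x ^+ n)^* = (x^*) ^+ n.
Proof. by rewrite rmorphXn. Qed.

Definition ph (s : 'I_4) : C := 'i ^+ s.

Lemma i4 : ('i : C) ^+ 4 = 1.
Proof. by rewrite (exprM _ 2 2) sqrCi sqrrN expr1n. Qed.

Lemma mi4 : (- 'i : C) ^+ 4 = 1.
Proof. by rewrite (exprM _ 2 2) sqrrN -exprM i4. Qed.

Lemma m1_neq1 : (-1 : C) != 1.
Proof.
by rewrite lt_eqF // (lt_trans (ltrN10 _) ltr01).
Qed.

Lemma i_neq1 : ('i : C) != 1.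
Proof. by apply/eqP => h; move: (sqrCi C); rewrite h expr1n => /eqP; rewrite eq_sym (negbTE m1_neq1). Qed.

Lemma mi_neq1 : (- 'i : C) != 1.
Proof. by apply/eqP => h; move: (sqrCi C); rewrite -sqrrN h expr1n => /eqP; rewrite eq_sym (negbTE m1_neq1). Qed.

Lemma geo4 (z : C) : z ^+ 4 = 1 -> z != 1 -> \sum_(s < 4) z ^+ s = 0.
Proof.
move=> h4 h1.
have -> : \sum_(s < 4) z ^+ s = 1 + z + z ^+ 2 + z ^+ 3.
  by rewrite !big_ord_recr big_ord0 /= add0r expr0 expr1.
have : (1 - z) * (1 + z + z ^+ 2 + z ^+ 3) == 0.
  apply/eqP; transitivity (1 - z ^+ 4); first by ring.
  by rewrite h4 subrr.
by rewrite mulf_eq0 subr_eq0 eq_sym (negbTE h1) /= => /eqP.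
Qed.

Lemma charsum (e1 e2 : nat) : (e1 <= 2)%N -> (e2 <= 2)%N ->
  \sum_(s < 4) (ph s) ^+ e1 * ((ph s)^*) ^+ e2 = if e1 == e2 then 4 else 0.
Proof.
move=> h1 h2; set z : C := 'i ^+ e1 * (- 'i) ^+ e2.
have hz (s : 'I_4) : (ph s) ^+ e1 * ((ph s)^*) ^+ e2 = z ^+ s.
  by rewrite /ph conjX conjCi -!exprM (mulnC s e1) (mulnC s e2) !exprM -exprMn.
under eq_bigr do rewrite hz.
case: eqP => [e|ne].
  have -> : z = 1 by rewrite /z e -exprMn mulrN -expr2 sqrCi opprK expr1n.
  by under eq_bigr do rewrite expr1n; rewrite sumr_const card_ord.
apply: geo4.
  by rewrite /z exprMn -!exprM (mulnC e1) (mulnC e2) !exprM i4 mi4 !expr1n mulr1.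
rewrite /z; clear hz z; move: h1 h2 ne; case: e1 => [|[|[|]]] //; case: e2 => [|[|[|]]] // _ _ _;
  rewrite ?expr0 ?expr1 ?mul1r ?mulr1 ?sqrrN ?sqrCi ?mulN1r ?mulrN1 ?opprK;
  rewrite ?m1_neq1 ?i_neq1 ?mi_neq1 //.
Qed.


Lemma multiset2 d (x1 x2 y1 y2 : 'I_d) :
  (forall t : 'I_d, ((t == x1) + (t == x2) == (t == y1) + (t == y2))%N) <->
  ((y1, y2) == (x1, x2)) || ((y1, y2) == (x2, x1)).
Proof.
split; last first.
  by case/orP => /eqP [-> ->] t //; rewrite addnC.
move=> h; have h1 := h x1; have h2 := h x2; rewrite eqxx in h1 h2.
case: (eqVneq y1 x1) => [e1|n1].
  subst y1; move: h2; rewrite eqn_add2l; case: (eqVneq x2 y2) => [->|ne].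
    by rewrite !eqxx.
  by rewrite !eqxx; move/eqP.
case: (eqVneq y2 x1) => [e2|n2].
  subst y2; move: h2; rewrite addnC eqn_add2r; case: (eqVneq x2 y1) => [->|ne].
    by rewrite !eqxx orbT.
  by rewrite !eqxx; move/eqP.
by move: h1; rewrite (eq_sym x1 y1) (eq_sym x1 y2) (negbTE n1) (negbTE n2) ?eqxx; case: (x1 == x2).
Qed.

Lemma prod_pow_eq d (f : 'I_d -> C) (x : 'I_d) : \prod_t f t ^+ (t == x) = f x.
Proof.
rewrite (bigD1 x) //= eqxx expr1 big1 ?mulr1 // => t /negbTE ->; by rewrite expr0.
Qed.

Lemma phase_sum d (x1 x2 y1 y2 : 'I_d) :
  \sum_(th : {ffun 'I_d -> 'I_4})
     ph (th x1) * (ph (th y1))^* * ph (th x2) * (ph (th y2))^* =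
  (4 ^ d)%:R * (((y1, y2) == (x1, x2)) || ((y1, y2) == (x2, x1)))%:R.
Proof.
pose e1 t := ((t == x1) + (t == x2))%N; pose e2 t := ((t == y1) + (t == y2))%N.
have hprod (th : {ffun 'I_d -> 'I_4}) :
  ph (th x1) * (ph (th y1))^* * ph (th x2) * (ph (th y2))^* =
  \prod_t (ph (th t) ^+ e1 t * ((ph (th t))^*) ^+ e2 t).
  rewrite big_split /= /e1 /e2.
  under eq_bigr do rewrite exprD.
  rewrite big_split /= !prod_pow_eq.
  under [X in _ = _ * X]eq_bigr do rewrite exprD.
  rewrite big_split /= !(prod_pow_eq (fun t => (ph (th t))^*)); ring.
under eq_bigr do rewrite hprod.
rewrite -(bigA_distr_bigA (fun t (s : 'I_4) => ph s ^+ e1 t * (ph s)^* ^+ e2 t)) /=.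
have b1 t : (e1 t <= 2)%N by rewrite /e1 -[2%N]/(1 + 1)%N leq_add ?leq_b1.
have b2 t : (e2 t <= 2)%N by rewrite /e2 -[2%N]/(1 + 1)%N leq_add ?leq_b1.
under eq_bigr do rewrite charsum //.
case: (boolP [forall t, e1 t == e2 t]) => hall.
  have -> : ((y1, y2) == (x1, x2)) || ((y1, y2) == (x2, x1)).
    by apply/multiset2 => t; apply: (forallP hall).
  under eq_bigr => t _ do rewrite (forallP hall t).
  by rewrite prodr_const card_ord mulr1 natrX.
have -> : ((y1, y2) == (x1, x2)) || ((y1, y2) == (x2, x1)) = false.
  apply/negbTE; apply: contra hall => /multiset2 h; apply/forallP => t; exact: h.
move: hall; rewrite negb_forall => /existsP [t0 ht0].
by rewrite (bigD1 t0) //= (negbTE ht0) mul0r mulr0.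
Qed.


Lemma sum_enum (K : finType) (F : K -> R) :
  \sum_(i < #|K|) F (enum_val i) = \sum_(q : K) F q.
Proof.
rewrite (reindex (@enum_val K (mem K))) //=.
exists enum_rank => [i _|q _]; [exact: enum_valK | exact: enum_rankK].
Qed.

Lemma sum_enumC (K : finType) (F : K -> C) :
  \sum_(i < #|K|) F (enum_val i) = \sum_(q : K) F q.
Proof.
rewrite (reindex (@enum_val K (mem K))) //=.
exists enum_rank => [i _|q _]; [exact: enum_valK | exact: enum_rankK].
Qed.

Lemma sep_of_fin2 d (K1 K2 : finType) (w : K1 -> K2 -> R) (A : K1 -> K2 -> op R 'I_d)
    (rho : op R ('I_d * 'I_d)%type) :
  (forall k l, 0 <= w k l) -> \sum_k \sum_l w k l = 1 -> (forall k l, density (A k l)) ->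
  (forall x y, rho x y = \sum_k \sum_l (w k l)%:C%C * tens (A k l) (A k l) x y) ->
  separable rho.
Proof.
move=> hw hs hA hrho.
exists #|{: K1 * K2}|, (fun i => w (enum_val i).1 (enum_val i).2),
  (fun i => A (enum_val i).1 (enum_val i).2), (fun i => A (enum_val i).1 (enum_val i).2).
split.
- by move=> i; apply: hw.
- by rewrite (sum_enum (fun q => w q.1 q.2)) -hs pair_bigA.
- by move=> i; split; apply: hA.
- move=> x y; rewrite hrho.
  rewrite (sum_enumC (fun q => (w q.1 q.2)%:C%C * tens (A q.1 q.2) (A q.1 q.2) x y)).
  by rewrite pair_bigA.
Qed.


Lemma ph_conj s : ph s * (ph s)^* = 1.
Proof. by rewrite /ph conjX conjCi -exprMn mulrN -expr2 sqrCi opprK expr1n. Qed.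

Lemma sqrt_sqC (r : R) : 0 <= r -> ((Num.sqrt r)%:C)%C * ((Num.sqrt r)%:C)%C = (r%:C)%C.
Proof. by move=> hr; rewrite -rmorphM /= -expr2 sqr_sqrtr. Qed.

Lemma sep_construct d' (p : 'I_d'.+1 -> 'I_d'.+1 -> R) (n : nat)
    (a : 'I_n -> 'I_d'.+1 -> R) (rho : op R ('I_d'.+1 * 'I_d'.+1)%type) :
  (forall k t, 0 <= a k t) -> (forall s t, Mp p s t = \sum_k a k s * a k t) ->
  \sum_s \sum_t Mp p s t = 1 ->
  (forall x y, rho x y = ((y == x) || (y == (x.2, x.1)))%:R * ((Mp p x.1 x.2)%:C)%C) ->
  separable rho.
Proof.
move=> ha hM h1 hrho.
pose N k := \sum_t a k t.
have hN0 k : 0 <= N k by apply: sumr_ge0 => t _.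
pose psi k (th : {ffun 'I_d'.+1 -> 'I_4}) t : C := ((Num.sqrt (a k t))%:C)%C * ph (th t).
have psin k th t : psi k th t * (psi k th t)^* = ((a k t)%:C)%C.
  rewrite /psi conjM conj_rC mulrACA sqrt_sqC // ph_conj mulr1 //.
pose A k th : op R 'I_d'.+1 := if N k == 0
  then (fun x y => (x == ord0)%:R * (y == ord0)%:R)
  else (fun x y => psi k th x * (psi k th y)^* / ((N k)%:C)%C).
pose D : R := ((4 ^ d'.+1)%N)%:R.
pose w k (th : {ffun 'I_d'.+1 -> 'I_4}) := N k ^+ 2 / D.
have h4 : D != 0 by rewrite pnatr_eq0 expn_eq0.
apply: (@sep_of_fin2 _ _ _ w A).
- by move=> k th; rewrite /w divr_ge0 ?sqr_ge0 ?ler0n.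
- rewrite /w; under eq_bigr do rewrite sumr_const card_ffun !card_ord -mulr_natr -/D (divfK h4).
  under eq_bigr do rewrite expr2 /N big_distrlr /=.
  rewrite exchange_big; under eq_bigr do rewrite exchange_big.
  rewrite -h1; apply: eq_bigr => s _; apply: eq_bigr => t _; by rewrite hM.
- move=> k th; rewrite /A; case: ifP => hN.
    split.
      apply: (psd_gram (I := 'I_1) (c := fun _ => 1) (F := fun _ (x : 'I_d'.+1) => ((x == ord0)%:R : C))) => //.
      by move=> x y; rewrite big_ord1 mul1r conj_Creal ?realn.
    rewrite (bigD1 ord0) // big1 => [|x /negbTE ->]; last by rewrite mul0r.
    by rewrite /= mulr1 addr0.
  split.
    apply: (psd_gram (I := 'I_1) (c := fun _ => (((N k)^-1)%:C)%C) (F := fun _ => psi k th)).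
      by move=> _; rewrite ler0c invr_ge0.
    by move=> x y; rewrite big_ord1 fmorphV /=; rewrite mulrC mulrA.
  under eq_bigr do rewrite psin.
  by rewrite -mulr_suml -rmorph_sum divff // fmorph_eq0 hN.
- move=> [x1 x2] [y1 y2]; rewrite hrho /=.
  pose sq k t := Num.sqrt (a k t).
  have sqsq k t : sq k t * sq k t = a k t by rewrite /sq -expr2 sqr_sqrtr.
  have hDC : ((D%:C)%C : C) = (4 ^ d'.+1)%:R by rewrite /D rmorph_nat.
  have key k : \sum_th ((w k th)%:C)%C * tens (A k th) (A k th) (x1, x2) (y1, y2) =
      (((y1, y2) == (x1, x2)) || ((y1, y2) == (x2, x1)))%:R * (((a k x1 * a k x2)%:C)%C).
    have step th : ((w k th)%:C)%C * tens (A k th) (A k th) (x1, x2) (y1, y2) =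
        psi k th x1 * (psi k th y1)^* * psi k th x2 * (psi k th y2)^* / ((D%:C)%C).
      rewrite /tens /A /w /=; case: ifP => hN.
        have az t : a k t = 0.
          by move/eqP: hN => /psumr_eq0P -> // t' _; apply: ha.
        by rewrite /psi !az sqrtr0 (eqP hN) expr0n /= mul0r rmorph0 !mul0r.
      have hNC : ((N k)%:C)%C != 0 :> C by rewrite fmorph_eq0 hN.
      have hDC' : ((D%:C)%C : C) != 0 by rewrite fmorph_eq0.
      rewrite rmorphM rmorphXn fmorphV /=; field.
      by rewrite pnatr_eq0 expn_eq0 /= fmorph_eq0 hN.
    under eq_bigr do rewrite step.
    rewrite -mulr_suml.
    have -> : \sum_th psi k th x1 * (psi k th y1)^* * psi k th x2 * (psi k th y2)^* =
      (((sq k x1 * sq k y1 * sq k x2 * sq k y2)%:C)%C) *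
      \sum_(th : {ffun 'I_d'.+1 -> 'I_4})
         ph (th x1) * (ph (th y1))^* * ph (th x2) * (ph (th y2))^*.
      rewrite mulr_sumr; apply: eq_bigr => th _.
      rewrite /psi !conjM !conj_rC !rmorphM /=; ring.
    rewrite phase_sum hDC.
    have h4C : (4 ^ d'.+1)%:R != 0 :> C by rewrite pnatr_eq0 expn_eq0.
    case: orP => [[/eqP [-> ->] | /eqP [-> ->]] | _].
    + have -> : sq k x1 * sq k x1 * sq k x2 * sq k x2 = a k x1 * a k x2.
        by rewrite -sqsq -(sqsq k x2); ring.
      by field.
    + have -> : sq k x1 * sq k x2 * sq k x2 * sq k x1 = a k x1 * a k x2.
        by rewrite -sqsq -(sqsq k x2); ring.
      by field.
    + by rewrite !mulr0 mul0r mul0r.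
  rewrite (eq_bigr _ (fun k _ => key k)) -mulr_sumr -rmorph_sum /= hM.
  by [].
Qed.


Lemma PPT_Mp d (rho : op R ('I_d * 'I_d)%type) (p : 'I_d -> 'I_d -> R) :
  (forall x y, rho x y = ((y == x) || (y == (x.2, x.1)))%:R * ((Mp p x.1 x.2)%:C)%C) ->
  PPT rho -> psdR (Mp p).
Proof.
move=> hrho [_ hq] c.
pose v (x : 'I_d * 'I_d) : C := if x.1 == x.2 then ((c x.1)%:C)%C else 0.
have sum_diag (F : 'I_d * 'I_d -> C) : (forall x, x.1 != x.2 -> F x = 0) ->
    \sum_x F x = \sum_s F (s, s).
  move=> hF; have -> : \sum_x F x = \sum_s \sum_t F (s, t).
    by rewrite pair_bigA; apply: eq_bigr => -[s t] _.
  apply: eq_bigr => s _.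
  rewrite (bigD1 s) //= big1 ?addr0 // => t hts; apply: hF => /=; by rewrite eq_sym.
have E : \sum_x \sum_y (v x)^* * ptransB rho x y * v y =
    (((\sum_s \sum_t c s * Mp p s t * c t)%:C)%C).
  rewrite (sum_diag (fun x => \sum_y (v x)^* * ptransB rho x y * v y)); last first.
    move=> x hx; rewrite /v (negbTE hx) conjC0 big1 // => y _; by rewrite !mul0r.
  rewrite rmorph_sum; apply: eq_bigr => s _ /=.
  rewrite (sum_diag (fun y => (v (s, s))^* * ptransB rho (s, s) y * v y)); last first.
    by move=> y hy; rewrite /v (negbTE hy) mulr0.
  rewrite rmorph_sum; apply: eq_bigr => t _ /=.
  rewrite /v /= !eqxx /ptransB hrho /= !eqxx orbT conj_rC !rmorphM /= mul1r.
  by [].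
have := hq v; rewrite E ler0c.
by [].
Qed.

End Quantum.

Unset Implicit Arguments.

Theorem theorem3 (R : realType) (d : nat) (hd : (2 <= d <= 4)%N)
    (rho : op R ('I_d * 'I_d)%type) :
  DS rho -> (separable rho <-> PPT rho).
Proof.
move=> hDS; split; first exact: sep_PPT.
move=> hP.
have [p [hp hs hrho]] := DS_form hDS.
move: hd rho hDS hP p hp hs hrho; case: d => [//|d'] hd rho hDS hP p hp hs hrho.
have hcard : (#|'I_d'.+1| <= 4)%N by rewrite card_ord; case/andP: hd.
have [n [a [ha hM]]] := CP_DNN hcard (fun x y => Mp_sym p x y)
   (fun x y => Mp_nonneg x y hp) (PPT_Mp hrho hP).
apply: (sep_construct ha hM _ hrho).
by rewrite Mp_sum.
Qed.
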